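(* Let $e'>2$ be an integer and $S=\{0\}\cup(e'+\mathbb N)$. Then the conductor of $S$ is $c'=e'$, and \[ \delta^2_S(c'+e'-2)=3,\qquad \delta^2_S(c'+e'-1)=4. \]
   Context: The conductor of a numerical semigroup $S$ is the least integer $c$ with $c+\mathbb N\subseteq S$. $D_S(x)=\{s\in S:x-s\in S\}$ and $\delta^2_S(m)=\min\{|D_S(m_1)\cup D_S(m_2)|: m\le m_1<m_2,\ m_1,m_2\in S\}$. *)

(* Defs.v *)
From mathcomp Require Import all_boot.
Set Implicit Arguments. Unset Strict Implicit. Unset Printing Implicit Defensive.

Definition semigroup_e (e : nat) : pred nat := fun n => (n == 0) || (e <= n).

Definition is_conductor (S : pred nat) (c : nat) : Prop :=
  (forall n, c <= n -> S n) /\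
  (forall c', (forall n, c' <= n -> S n) -> c <= c').

(* D_S(x) = {s ∈ S : x - s ∈ S}; x - s is an integer, so membership forces s <= x. *)
Definition DS (S : pred nat) (x : nat) : pred nat :=
  fun s => [&& S s, s <= x & S (x - s)].

(* |D_S(m1) ∪ D_S(m2)|; all elements lie in [0, max m1 m2]. *)
Definition card_union_DS (S : pred nat) (m1 m2 : nat) : nat :=
  count (fun s => DS S m1 s || DS S m2 s) (iota 0 (maxn m1 m2).+1).

Definition is_delta2 (S : pred nat) (m k : nat) : Prop :=
  (exists m1 m2, [/\ m <= m1, m1 < m2, S m1, S m2 & card_union_DS S m1 m2 = k]) /\
  (forall m1 m2, m <= m1 -> m1 < m2 -> S m1 -> S m2 -> k <= card_union_DS S m1 m2).

(* Main.v *)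
Require Import Defs.
From mathcomp Require Import all_boot.
From mathcomp Require Import zify.

Lemma L1 (P : pred nat) (l s : seq nat) :
  uniq l -> {subset l <= s} -> all P l -> size l <= count P s.
Proof.
move=> ul sub aP; rewrite -size_filter; apply: uniq_leq_size => // x xl.
by rewrite mem_filter (allP aP x xl) sub.
Qed.

Lemma L2 (P : pred nat) (l s : seq nat) :
  uniq s -> (forall x, x \in s -> P x -> x \in l) -> count P s <= size l.
Proof.
move=> us H; rewrite -size_filter; apply: uniq_leq_size.
  by apply: filter_uniq.
by move=> x; rewrite mem_filter => /andP[Px xs]; apply: H.
Qed.

Theorem lemma4p9 (e' : nat) (he : 2 < e') :
  let S := semigroup_e e' in
  is_conductor S e' /\
  (forall c', is_conductor S c' ->
     is_delta2 S (c' + e' - 2) 3 /\ is_delta2 S (c' + e' - 1) 4).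
Proof.
move=> S.
have cond : is_conductor S e'.
  split; first by move=> n hn; rewrite /S /semigroup_e; lia.
  move=> c' H; case: (leqP e' c') => // lt.
  have := H e'.-1; rewrite /S /semigroup_e; lia.
split=> // c' [H1 H2].
have -> : c' = e'.
  case: cond => [C1 C2]; have := H2 _ C1; have := C2 _ H1; lia.
rewrite /is_delta2 /card_union_DS /DS /S /semigroup_e.
split; split.
- exists (e' + e' - 2), (e' + e' - 1); split; try lia.
  apply/eqP; rewrite eqn_leq; apply/andP; split.
  + apply: (@L2 _ [:: 0; e' + e' - 2; e' + e' - 1]); first exact: iota_uniq.
    move=> x _; rewrite !inE; lia.
  + apply: (@L1 _ [:: 0; e' + e' - 2; e' + e' - 1]).
    * rewrite /= !inE; lia.
    * move=> x; rewrite !inE mem_iota; lia.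
    * rewrite /=; lia.
- move=> m1 m2 h1 h2 h3 h4.
  apply: (@L1 _ [:: 0; m1; m2]).
  * rewrite /= !inE; lia.
  * move=> x; rewrite !inE mem_iota; lia.
  * rewrite /=; lia.
- exists (e' + e' - 1), (e' + e'); split; try lia.
  apply/eqP; rewrite eqn_leq; apply/andP; split.
  + apply: (@L2 _ [:: 0; e'; e' + e' - 1; e' + e']); first exact: iota_uniq.
    move=> x _; rewrite !inE; lia.
  + apply: (@L1 _ [:: 0; e'; e' + e' - 1; e' + e']).
    * rewrite /= !inE; lia.
    * move=> x; rewrite !inE mem_iota; lia.
    * rewrite /=; lia.
- move=> m1 m2 h1 h2 h3 h4.
  apply: (@L1 _ [:: 0; e'; m1; m2]).
  * rewrite /= !inE; lia.
  * move=> x; rewrite !inE mem_iota; lia.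
  * rewrite /=; lia.
Qed.
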